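(* Let $G=(V,E)$ and $H$ be graphs such that $H$ is obtained from $G$ by a $Q$-switching with switching set $X$. Let $Y\subseteq V\setminus X$ and let $F$ be a set of edges of $G[X\cup Y]$ with $F\cap E(G_X)=\emptyset$. Then $H[X\cup Y]-F$ is obtained from $G[X\cup Y]-F$ by a $Q$-switching with switching set $X$; in particular these two graphs are cospectral.
   Context: Graphs are finite and simple. $Q$ is a $k\times k$ real orthogonal matrix with no integral rows (no row consisting only of integers). $H$ is obtained from $G$ by a $Q$-switching with switching set $X$ ($|X|=k$) if $H$ has the same vertex set $V$ and, after ordering the vertices with $X$ first, $A_H=M^TA_GM$ with $M=\operatorname{diag}(Q,-I_a,I_b)$ block diagonal, $a+b=|V|-k$. For $S\subseteq V$, $G[S]$ and $H[S]$ denote induced subgraphs; $\Gamma-F$ denotes removal of the edges $F$. The neighborhood graph $G_X$ has vertex set $X\cup N(X)$, where $N(X)$ is the set of vertices adjacent to some vertex of $X$, and edge set the edges of $G$ having at least one endpoint in $X$. Two graphs are cospectral if their adjacency matrices have the same spectrum. *)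

(* Defs.v *)
From HB Require Import structures.
From mathcomp Require Import all_boot all_order all_algebra.
From mathcomp Require Import reals.
Set Implicit Arguments. Unset Strict Implicit. Unset Printing Implicit Defensive.
Import Order.TTheory GRing.Theory Num.Theory.
Local Open Scope ring_scope.

Definition simple_graph (T : finType) (g : rel T) :=
  symmetric g /\ irreflexive g.

Definition orthogonal_mx (R : realType) (k : nat) (Q : 'M[R]_k) :=
  Q^T *m Q = 1%:M.

Definition no_integral_row (R : realType) (k : nat) (Q : 'M[R]_k) :=
  forall i : 'I_k, exists j : 'I_k, Q i j \notin Num.int.

(* The switching matrix M = diag(Q, -I_a, I_b), written in the original
   (unordered) vertex labelling: f : 'I_k -> T enumerates X in the order
   used for the block Q, and s u = true means u (outside X) gets the -1
   entry (i.e. u belongs to the -I_a block). *)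
Definition switch_mx (R : realType) (T : finType) (k : nat) (Q : 'M[R]_k)
    (X : {set T}) (f : 'I_k -> T) (s : T -> bool) (u v : T) : R :=
  \sum_(i < k) \sum_(j < k) ((f i == u) && (f j == v))%:R * Q i j
  + ((u == v) && (u \notin X))%:R * (-1) ^+ s u.

Definition Qswitching (R : realType) (T : finType) (k : nat) (Q : 'M[R]_k)
    (X : {set T}) (g h : rel T) :=
  exists f : 'I_k -> T, injective f /\ X = [set f i | i in 'I_k] /\
  exists s : T -> bool, forall u v : T,
    (h u v)%:R = \sum_(x : T) \sum_(y : T) switch_mx Q X f s x u * (g x y)%:R
                                                * switch_mx Q X f s y v.

Definition adjmx (R : realType) (T : finType) (g : rel T) : 'M[R]_#|T| :=
  \matrix_(i, j) (g (enum_val i) (enum_val j))%:R.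

(* Cospectral: adjacency matrices have the same spectrum (with multiplicity),
   i.e. the same characteristic polynomial. *)
Definition cospectral (R : realType) (T : finType) (g h : rel T) :=
  char_poly (adjmx R g) = char_poly (adjmx R h).

Definition subV (T : finType) (S : {set T}) : finType := {x : T | x \in S}.

Definition induced_minus (T : finType) (g : rel T) (S : {set T})
    (F : {set {set T}}) : rel (subV S) :=
  fun u v => g (val u) (val v) && ([set val u; val v] \notin F).

Definition sub_set (T : finType) (S : {set T}) (X : {set T}) : {set subV S} :=
  [set x : subV S | val x \in X].
Arguments sub_set {T} S X.
Arguments induced_minus {T} g S F.

(* Main.v *)
Require Import Defs.
From HB Require Import structures.
From mathcomp Require Import all_boot all_order all_algebra.
From mathcomp Require Import reals.
Set Implicit Arguments. Unset Strict Implicit. Unset Printing Implicit Defensive.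
Import Order.TTheory GRing.Theory Num.Theory.
Local Open Scope ring_scope.

Lemma M_out (R : realType) (T : finType) (k : nat) (Q : 'M[R]_k) (X : {set T})
  (f : 'I_k -> T) (s : T -> bool) (hX : X = [set f i | i in 'I_k]) x u :
  ~~ ((x \in X) && (u \in X)) ->
  switch_mx Q X f s x u = ((x == u) && (x \notin X))%:R * (-1) ^+ s x.
Proof.
move=> h; rewrite /switch_mx big1 ?add0r // => i _; rewrite big1 // => j _.
have fX : forall l, f l \in X by move=> l; rewrite hX; apply: imset_f.
have : ~~ ((f i == x) && (f j == u)).
  by apply: contra h => /andP[/eqP <- /eqP <-]; rewrite !fX.
by move/negbTE => ->; rewrite mul0r.
Qed.

Lemma M_in (R : realType) (T : finType) (k : nat) (Q : 'M[R]_k) (X : {set T})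
  (f : 'I_k -> T) (s : T -> bool) (hX : X = [set f i | i in 'I_k])
  (finj : injective f) i j :
  switch_mx Q X f s (f i) (f j) = Q i j.
Proof.
have fX : forall l, f l \in X by move=> l; rewrite hX; apply: imset_f.
rewrite /switch_mx fX andbF mul0r addr0.
rewrite (bigD1 i) //= [X in _ + X]big1 ?addr0 => [|i' ne]; last first.
  by rewrite big1 // => j' _; rewrite (inj_eq finj) (negbTE ne) mul0r.
rewrite (bigD1 j) //= [X in _ + X]big1 ?addr0 => [|j' ne]; last first.
  by rewrite eqxx (inj_eq finj) (negbTE ne) mul0r.
by rewrite !eqxx mul1r.
Qed.

Lemma M_nz (R : realType) (T : finType) (k : nat) (Q : 'M[R]_k) (X : {set T})
  (f : 'I_k -> T) (s : T -> bool) (hX : X = [set f i | i in 'I_k]) x u :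
  switch_mx Q X f s x u != 0 ->
  ((x \in X) && (u \in X)) || ((x == u) && (x \notin X)).
Proof.
case: (boolP ((x \in X) && (u \in X))) => //= h.
rewrite (M_out _ _ hX h); by case: ((x == u) && (x \notin X)); rewrite ?mul0r ?eqxx.
Qed.

Lemma M_orth (R : realType) (T : finType) (k : nat) (Q : 'M[R]_k) (X : {set T})
  (f : 'I_k -> T) (s : T -> bool) (hX : X = [set f i | i in 'I_k])
  (finj : injective f) (hQ : orthogonal_mx Q) u v :
  \sum_x switch_mx Q X f s x u * switch_mx Q X f s x v = (u == v)%:R.
Proof.
pose M := switch_mx Q X f s.
have fX : forall l, f l \in X by move=> l; rewrite hX; apply: imset_f.
have outl : forall u v, u \notin X -> \sum_x M x u * M x v = (u == v)%:R.
  move=> a b aX.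
  rewrite (bigD1 a) //= big1 ?addr0 => [|x xa]; last first.
    by rewrite /M (M_out _ _ hX) ?(negbTE aX) ?andbF // (negbTE xa) mul0r mul0r.
  rewrite /M !(M_out _ _ hX) ?(negbTE aX) ?andbF // eqxx /= mul1r andbT.
  case: (a == b) => /=; [by rewrite mul1r -expr2 sqrr_sign | by rewrite mul0r mulr0].
case: (boolP (u \in X)) => uX; last exact: outl.
case: (boolP (v \in X)) => vX; last first.
  rewrite eq_sym -outl //; apply: eq_bigr => x _; exact: mulrC.
rewrite (bigID (mem X)) /= [X in _ + X]big1 ?addr0 => [|x xX]; last first.
  have xu : (x == u) = false by apply/negbTE; apply: contraNneq xX => ->.
  by rewrite /M (M_out _ _ hX) ?(negbTE xX) // xu mul0r mul0r.
move: uX vX; rewrite {1 2}hX => /imsetP [a _ ->] /imsetP [b _ ->].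
have -> : \sum_(x in X) M x (f a) * M x (f b) = \sum_(x in [set f i | i in 'I_k]) M x (f a) * M x (f b) by rewrite -hX.
rewrite big_imset /=; last by move=> ? ? _ _; apply: finj.
under eq_bigr do rewrite /M !(M_in _ _ hX finj).
rewrite (inj_eq finj); move: hQ => /matrixP/(_ a b); rewrite !mxE => <-.
by apply: eq_bigr => i _; rewrite mxE.
Qed.

Lemma char_poly_sim (R : comNzRingType) n (A P Pi : 'M[R]_n) :
  Pi *m P = 1%:M -> char_poly (Pi *m A *m P) = char_poly A.
Proof.
move=> hP; rewrite /char_poly /char_poly_mx.
set f := map_mx (@polyC R).
have hf : f Pi *m f P = 1%:M by rewrite -map_mxM hP map_mx1.
rewrite /f map_mxM map_mxM -/f.
rewrite [X in \det (X - _)](_ : _ = f Pi *m 'X%:M *m f P); last first.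
  by rewrite scalar_mxC -mulmxA hf mulmx1.
by rewrite -mulmxBl -mulmxBr !det_mulmx mulrAC -det_mulmx hf det1 mul1r.
Qed.

Lemma Qsw_cosp (R : realType) (T : finType) (k : nat) (Q : 'M[R]_k)
  (X : {set T}) (g h : rel T) :
  orthogonal_mx Q -> Qswitching Q X g h -> cospectral R g h.
Proof.
move=> hQ [f [finj [hX [s hs]]]].
pose M := switch_mx Q X f s.
pose P : 'M[R]_#|T| := \matrix_(i, j) M (enum_val i) (enum_val j).
have sumE : forall F : T -> R, \sum_x F x = \sum_(i < #|T|) F (enum_val i).
  by move=> F; rewrite (reindex _ (onW_bij _ (@enum_val_bij T))).
have hPP : P^T *m P = 1%:M.
  apply/matrixP => i j; rewrite !mxE.
  rewrite -(inj_eq (@enum_val_inj _ T)) -(M_orth s hX finj hQ) sumE.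
  by apply: eq_bigr => l _; rewrite !mxE.
have hA : adjmx R h = P^T *m adjmx R g *m P.
  apply/matrixP => i j; rewrite !mxE hs sumE.
  under eq_bigr do rewrite sumE.
  rewrite exchange_big; apply: eq_bigr => b _; rewrite !mxE mulr_suml.
  by apply: eq_bigr => a _; rewrite !mxE.
by rewrite /cospectral hA char_poly_sim.
Qed.

Unset Implicit Arguments. Set Strict Implicit.

Theorem lemma3p3 (R : realType) (V : finType) (k : nat) (Q : 'M[R]_k)
    (G H : rel V) (X Y : {set V}) (F : {set {set V}}) :
  simple_graph G -> simple_graph H ->
  orthogonal_mx Q -> no_integral_row Q ->
  Qswitching Q X G H ->
  Y \subset ~: X ->
  (* F is a set of edges of G[X ∪ Y] *)
  (forall e, e \in F -> exists u v, [/\ e = [set u; v], G u v,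
                                       u \in X :|: Y & v \in X :|: Y]) ->
  (* F ∩ E(G_X) = ∅ : no edge of F has an endpoint in X *)
  (forall u v, G u v -> (u \in X) || (v \in X) -> [set u; v] \notin F) ->
  Qswitching Q (sub_set (X :|: Y) X)
             (induced_minus G (X :|: Y) F) (induced_minus H (X :|: Y) F)
  /\ cospectral R (induced_minus G (X :|: Y) F) (induced_minus H (X :|: Y) F).
Proof.
move=> _ _ hQ _ [f [finj [hX [s hs]]]] _ hF hFX.
set S := X :|: Y.
have fX : forall i, f i \in X by move=> i; rewrite hX; apply: imset_f.
have fS : forall i, f i \in S by move=> i; rewrite inE fX.
pose f' : 'I_k -> subV S := fun i => @exist V (fun x => x \in S) (f i) (fS i).
pose s' := fun x : subV S => s (val x).
have Fgood : forall a b, (a \in X) || (b \in X) -> [set a; b] \notin F.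
  move=> a b hab; apply/negP => hin.
  have [u' [v' [e Guv _ _]]] := hF _ hin.
  have : (u' \in X) || (v' \in X).
    case/orP: hab => hx.
    - have : a \in [set u'; v'] by rewrite -e !inE eqxx.
      by rewrite !inE => /orP [/eqP <-|/eqP <-]; rewrite hx ?orbT.
    - have : b \in [set u'; v'] by rewrite -e !inE eqxx orbT.
      by rewrite !inE => /orP [/eqP <-|/eqP <-]; rewrite hx ?orbT.
  by move/(hFX _ _ Guv); rewrite -e hin.
have hM : forall x u : subV S,
    switch_mx Q (sub_set S X) f' s' x u = switch_mx Q X f s (val x) (val u).
  move=> x u; rewrite /switch_mx; congr (_ + _).
  by rewrite /sub_set in_set.
have hX' : sub_set S X = [set f' i | i in 'I_k].
  apply/setP => x; rewrite inE hX; apply/imsetP/imsetP => [[i _ e]|[i _ ->]].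
    by exists i => //; apply: val_inj; rewrite e.
  by exists i.
have finj' : injective f' by move=> i j /(congr1 val) /finj.
have Mout : forall x u, x \notin S -> u \in S -> switch_mx Q X f s x u = 0.
  move=> x u xS uS; have xX : x \notin X by apply: contra xS; rewrite inE => ->.
  have xu : (x == u) = false by apply/negbTE/eqP => e; rewrite e uS in xS.
  by rewrite (M_out _ _ hX) ?(negbTE xX) // xu mul0r.
have subE : forall Fn : V -> R, \sum_(x : subV S) Fn (val x) = \sum_(x in S) Fn x.
  by move=> Fn; symmetry; exact: (big_sub (mem S) Fn).
have Q1 : Qswitching Q (sub_set S X) (induced_minus G S F) (induced_minus H S F).
  exists f'; split => //; split => //; exists s' => u v.
  rewrite /induced_minus -mulnb natrM hs.
  transitivity (\sum_(x in S) \sum_(y in S) switch_mx Q X f s x (val u) *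
      (G x y && ([set x; y] \notin F))%:R * switch_mx Q X f s y (val v)); last first.
    rewrite -subE; apply: eq_bigr => x _; rewrite -subE.
    by apply: eq_bigr => y _; rewrite !hM.
  rewrite mulr_suml (bigID (mem S)) /= [X in _ + X]big1 ?addr0 => [|x xS]; last first.
    by rewrite big1 ?mul0r // => y _; rewrite Mout ?(valP u) // !mul0r.
  apply: eq_bigr => x xS.
  rewrite mulr_suml (bigID (mem S)) /= [X in _ + X]big1 ?addr0 => [|y yS]; last first.
    by rewrite (Mout y) ?(valP v) // !(mulr0, mul0r).
  apply: eq_bigr => y yS.
  set a := switch_mx Q X f s x (val u); set b := switch_mx Q X f s y (val v).
  case: (eqVneq a 0) => [->|ha]; first by rewrite !mul0r.
  case: (eqVneq b 0) => [->|hb]; first by rewrite !(mulr0, mul0r).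
  case Gxy: (G x y); last by rewrite /= !(mulr0, mul0r).
  rewrite /=.
  move: (M_nz hX ha) (M_nz hX hb) => /orP[/andP[xX uX] | /andP[/eqP xu _]]
    /orP[/andP[yX vX] | /andP[/eqP yv _]].
  - by rewrite (Fgood x y) ?xX // (Fgood _ _ (_ : _ || _)) ?uX // mulr1.
  - by rewrite (Fgood x y) ?xX // (Fgood _ _ (_ : _ || _)) ?uX // mulr1.
  - by rewrite (Fgood x y) ?yX ?orbT // (Fgood _ _ (_ : _ || _)) ?vX ?orbT // mulr1.
  - by rewrite xu yv mulr1 mulrAC.
split => //; exact: Qsw_cosp hQ Q1.
Qed.
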